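(* For every integer $F\ge12$, $s(F,4,3)=4F-30$.
   Context: A placement delivery array $S$-PDA$(F,K,Z)$ is an $F\times K$ array $R=(r_{j,k})$, $1\le j\le F$, $1\le k\le K$, over a finite set $S$ such that: (1) each cell is either empty or contains an element of $S$; (2) each column contains exactly $Z$ empty cells; (3) each element of $S$ occurs at most once in each row and at most once in each column; (4) if two distinct nonempty cells satisfy $r_{j_1,k_1}=r_{j_2,k_2}=t\in S$, then the cells $r_{j_1,k_2}$ and $r_{j_2,k_1}$ are empty. For integers $F,K\ge1$, $0\le Z\le F$, define $s(F,K,Z)=\min\{|S| : \text{there exists an } S\text{-PDA}(F,K,Z)\}$. *)

(* Defs.v *)
From mathcomp Require Import all_boot.
Set Implicit Arguments. Unset Strict Implicit. Unset Printing Implicit Defensive.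

(* A placement delivery array S-PDA(F,K,Z): an F x K array whose cells are
   either empty (None) or contain an element of the finite set S (Some t). *)
Definition is_PDA (S : finType) (F K Z : nat) (R : 'I_F -> 'I_K -> option S) : Prop :=
  (forall k : 'I_K, #|[set j : 'I_F | R j k == None]| = Z) /\
  (forall (j : 'I_F) (k1 k2 : 'I_K) (t : S),
      R j k1 = Some t -> R j k2 = Some t -> k1 = k2) /\
  (forall (j1 j2 : 'I_F) (k : 'I_K) (t : S),
      R j1 k = Some t -> R j2 k = Some t -> j1 = j2) /\
  (forall (j1 j2 : 'I_F) (k1 k2 : 'I_K) (t : S),
      (j1, k1) <> (j2, k2) -> R j1 k1 = Some t -> R j2 k2 = Some t ->
      R j1 k2 = None /\ R j2 k1 = None).

Definition PDA_exists (F K Z n : nat) : Prop :=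
  exists R : 'I_F -> 'I_K -> option 'I_n, is_PDA Z R.

(* s(F,K,Z) = n, i.e. n is the minimum |S| over all S-PDA(F,K,Z). *)
Definition s_is (F K Z n : nat) : Prop :=
  PDA_exists F K Z n /\ forall m, PDA_exists F K Z m -> n <= m.

(* Main.v *)
Require Import Defs.
From mathcomp Require Import all_boot zify.
Set Implicit Arguments. Unset Strict Implicit. Unset Printing Implicit Defensive.

Definition table : seq (seq (option nat)) :=
 [:: [:: None; Some 0; Some 3; Some 6];
     [:: None; Some 1; Some 4; Some 7];
     [:: None; Some 2; Some 5; Some 8];
     [:: Some 0; None; Some 9; Some 12];
     [:: Some 1; None; Some 10; Some 13];
     [:: Some 2; None; Some 11; Some 14];
     [:: Some 3; Some 9; None; Some 15];
     [:: Some 4; Some 10; None; Some 16];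
     [:: Some 5; Some 11; None; Some 17];
     [:: Some 6; Some 12; Some 15; None];
     [:: Some 7; Some 13; Some 16; None];
     [:: Some 8; Some 14; Some 17; None]].

Definition spec j k : option nat := nth None (nth [::] table j) k.

Definition good j1 k1 j2 k2 :=
  if spec j1 k1 is Some s then
    (spec j2 k2 != Some s) || ((j1 == j2) && (k1 == k2)) ||
    ((spec j1 k2 == None) && (spec j2 k1 == None))
  else true.

Lemma good_all : all (fun j1 => all (fun k1 => all (fun j2 => all (fun k2 =>
   good j1 k1 j2 k2) (iota 0 4)) (iota 0 12)) (iota 0 4)) (iota 0 12).
Proof. by vm_compute. Qed.

Lemma bnd_all : all (fun j => all (fun k => if spec j k is Some s then s < 18 else true)
   (iota 0 4)) (iota 0 12).
Proof. by vm_compute. Qed.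

Lemma goodP j1 k1 j2 k2 : j1 < 12 -> k1 < 4 -> j2 < 12 -> k2 < 4 -> good j1 k1 j2 k2.
Proof.
move=> h1 h2 h3 h4.
have := good_all => /allP /(_ j1); rewrite mem_iota h1 => /(_ isT).
move=> /allP /(_ k1); rewrite mem_iota h2 => /(_ isT).
move=> /allP /(_ j2); rewrite mem_iota h3 => /(_ isT).
by move=> /allP /(_ k2); rewrite mem_iota h4 => /(_ isT).
Qed.

Lemma bndP j k s : j < 12 -> k < 4 -> spec j k = Some s -> s < 18.
Proof.
move=> h1 h2 e.
have := bnd_all => /allP /(_ j); rewrite mem_iota h1 => /(_ isT).
by move=> /allP /(_ k); rewrite mem_iota h2 e => /(_ isT).
Qed.

Definition r j k : option nat := if j < 12 then spec j k else Some (18 + 4 * (j - 12) + k).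

Lemma r_main j1 k1 j2 k2 s : k1 < 4 -> k2 < 4 -> r j1 k1 = Some s -> r j2 k2 = Some s ->
  (j1 = j2 /\ k1 = k2) \/ (r j1 k2 = None /\ r j2 k1 = None).
Proof.
rewrite /r => hk1 hk2.
case: (ltnP j1 12) => hj1; case: (ltnP j2 12) => hj2.
- move=> e1 e2; have := goodP hj1 hk1 hj2 hk2; rewrite /good e1 e2 eqxx /=.
  case/orP => [/andP [/eqP -> /eqP ->]|/andP [/eqP -> /eqP ->]]; by [left|right].
- move=> e1 [e2]; have := bndP hj1 hk1 e1; lia.
- move=> [e1] e2; have := bndP hj2 hk2 e2; lia.
- move=> [e1] [e2]; left; split; lia.
Qed.

Lemma r_bound F j k s : 12 <= F -> j < F -> k < 4 -> r j k = Some s -> s < 4 * F - 30.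
Proof.
rewrite /r => hF hj hk; case: ltnP => h.
  by move=> e; have := bndP h hk e; lia.
by case=> <-; lia.
Qed.

Definition Rc F (j : 'I_F) (k : 'I_4) : option 'I_(4 * F - 30) :=
  obind (fun s => insub s) (r j k).

Lemma RcS F j k t : @Rc F j k = Some t -> r j k = Some (val t).
Proof.
rewrite /Rc; case: (r j k) => [s|] //=.
by case: insubP => // u _ <- [<-].
Qed.

Lemma RcN F j k : 12 <= F -> (@Rc F j k == None) = (r j k == None).
Proof.
move=> hF; rewrite /Rc; case E: (r j k) => [s|] //=.
have h := r_bound hF (ltn_ord j) (ltn_ord k) E.
by case: insubP => //; rewrite h.
Qed.

Lemma card_sum (T : finType) (P : pred T) : #|[set x | P x]| = \sum_(x : T) (if P x then 1 else 0).
Proof. by rewrite -sum1_card -big_mkcond; apply: eq_bigl => x; rewrite inE. Qed.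

Lemma upper F : 12 <= F -> PDA_exists F 4 3 (4 * F - 30).
Proof.
move=> hF; exists (@Rc F); split; last split; last split.
- move=> k; rewrite card_sum.
  under eq_bigr => j _ do rewrite RcN //.
  rewrite -(big_mkord xpredT (fun i => if r i k == None then 1 else 0)).
  rewrite (@big_cat_nat _ _ _ 12) //=.
  rewrite [X in _ + X]big1_seq ?addn0; last first.
    move=> i /andP [_]; rewrite mem_index_iota => /andP [hi _].
    by rewrite /r ltnNge hi.
  by case: k => [[|[|[|[|k]]]] hk] //; rewrite unlock.
- move=> j k1 k2 t /RcS e1 /RcS e2.
  case: (r_main (ltn_ord k1) (ltn_ord k2) e1 e2) => [[_ e]|[h _]]; first exact: val_inj.
  by rewrite h in e2.
- move=> j1 j2 k t /RcS e1 /RcS e2.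
  case: (r_main (ltn_ord k) (ltn_ord k) e1 e2) => [[e _]|[h _]]; first exact: val_inj.
  by rewrite h in e1.
- move=> j1 j2 k1 k2 t ne /RcS e1 /RcS e2.
  case: (r_main (ltn_ord k1) (ltn_ord k2) e1 e2) => [[a b]|[h1 h2]].
    by case: ne; congr pair; apply: val_inj.
  by split; apply/eqP; rewrite RcN // ?h1 ?h2.
Qed.
Lemma arith48 n : n <= 4 -> 48 <= (4 - n) * (12 %/ n.+1) + 30 * n.
Proof. by case: n => [|[|[|[|[|n]]]]]. Qed.

Definition gR F m (R : 'I_F -> 'I_4 -> option 'I_m) t :=
  #|[set c : 'I_F * 'I_4 | R c.1 c.2 == Some t]|.
Definition nR F m (R : 'I_F -> 'I_4 -> option 'I_m) j := #|[set k : 'I_4 | R j k == None]|.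
Definition fR F m (R : 'I_F -> 'I_4 -> option 'I_m) j k :=
  if R j k is Some t then 12 %/ gR R t else 0.

Lemma g_le F m (R : 'I_F -> 'I_4 -> option 'I_m) (HR : is_PDA 3 R) j k t : R j k = Some t -> 0 < gR R t /\ gR R t <= (nR R j).+1.
Proof.
case: HR => _ [_ [Hcol H4]] Hjk; split.
  by apply/card_gt0P; exists (j, k); rewrite inE /= Hjk.
pose S := [set c : 'I_F * 'I_4 | R c.1 c.2 == Some t].
have inj : {in S &, injective (fun c : 'I_F * 'I_4 => c.2)}.
  move=> [j1 k1] [j2 k2]; rewrite !inE /= => /eqP h1 /eqP h2 e; rewrite -e in h2 *.
  by rewrite (Hcol _ _ _ _ h1 h2).
rewrite /gR -/S -(card_in_imset inj).
apply: leq_trans (_ : #|k |: [set k2 | R j k2 == None]| <= _).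
  apply: subset_leq_card; apply/subsetP => _ /imsetP [[j2 k2] + ->] /=.
  rewrite !inE /= => /eqP h2.
  idtac.
  case: (eqVneq k2 k) => [//|ne] /=.
  apply/eqP.
  have [] := H4 j j2 k k2 t _ Hjk h2 => //.
  by case=> _ e; rewrite e eqxx in ne.
by rewrite cardsU1; case: (k \notin _).
Qed.

Lemma row_bound F m (R : 'I_F -> 'I_4 -> option 'I_m) (HR : is_PDA 3 R) j : 48 <= \sum_(k < 4) fR R j k + 30 * nR R j.
Proof.
set A := [set k : 'I_4 | R j k == None].
have nle : nR R j <= 4 by rewrite /nR -/A; apply: leq_trans (max_card _) _; rewrite card_ord.
apply: leq_trans (arith48 nle) _; rewrite leq_add2r.
have -> : 4 - nR R j = #|~: A| by rewrite cardsCs setCK card_ord.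
rewrite -sum_nat_const big_mkcond /=; apply: leq_sum => k _.
rewrite /fR !inE; case E: (R j k) => [t|] //=.
have [g0 gle] := g_le HR E.
exact: leq_div2l.
Qed.



Lemma sum_n F m (R : 'I_F -> 'I_4 -> option 'I_m) (HR : is_PDA 3 R) : \sum_(j < F) nR R j = 12.
Proof.
case: HR => Hc _.
rewrite /nR; under eq_bigr => j _ do rewrite card_sum.
rewrite exchange_big /=.
under eq_bigr => k _ do rewrite -card_sum Hc.
by rewrite sum_nat_const card_ord.
Qed.

Lemma sum_f F m (R : 'I_F -> 'I_4 -> option 'I_m) (HR : is_PDA 3 R) : \sum_(t : 'I_m) gR R t * (12 %/ gR R t) = \sum_(j < F) \sum_(k < 4) fR R j k.
Proof.
have G t w : gR R t * w = \sum_(c : 'I_F * 'I_4) (if R c.1 c.2 == Some t then w else 0).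
  rewrite /gR card_sum big_distrl; apply: eq_bigr => c _ /=; by case: (_ == _); rewrite ?mul1n ?mul0n.
rewrite pair_big /=.
under eq_bigr => t _ do rewrite G.
rewrite exchange_big /=; apply: eq_bigr => [[j k]] _ /=.
rewrite /fR; case E: (R j k) => [t0|].
  rewrite (bigD1 t0) //= eqxx big1 ?addn0 // => t ne.
  by case: eqP => // [[e]]; rewrite e eqxx in ne.
by rewrite big1.
Qed.

Lemma lower F m (R : 'I_F -> 'I_4 -> option 'I_m) (HR : is_PDA 3 R) : 4 * F - 30 <= m.
Proof.
have h1 : \sum_(t : 'I_m) gR R t * (12 %/ gR R t) <= 12 * m.
  rewrite -[in X in _ <= 12 * X](card_ord m) mulnC -sum_nat_const.
  apply: leq_sum => t _; rewrite mulnC; exact: leq_divM.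
have h2 : 48 * F <= \sum_(j < F) (\sum_(k < 4) fR R j k + 30 * nR R j).
  rewrite -[in X in _ * X <= _](card_ord F) mulnC -sum_nat_const.
  by apply: leq_sum => j _; apply: (row_bound HR).
rewrite big_split /= -big_distrr /= (sum_n HR) -(sum_f HR) in h2.
have : 48 * F <= 12 * m + 360 by apply: (leq_trans h2); rewrite leq_add2r.
move=> h; rewrite leq_subLR; rewrite -(leq_pmul2l (_ : 0 < 12)) //.
by rewrite mulnDr mulnA; apply: leq_trans h _; rewrite addnC.
Qed.


Theorem mainTheorem17 (F : nat) : 12 <= F -> s_is F 4 3 (4 * F - 30).
Proof.
move=> hF; split; first exact: upper.
by move=> m [R HR]; exact: lower HR.
Qed.
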